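(* Let $t$ be an integer and let $G$ be a topologically $t$-chromatic graph with at least one edge. Then for every field $\mathbb{F}$, \[\overline{\xi}_l(G,\mathbb{F}) \geq \lceil t/2 \rceil + 1.\]
   Context: All graphs are finite, simple and undirected. For a vertex $v$, $N(v)$ is the set of neighbors of $v$, and $\{v\}\cup N(v)$ is its closed neighborhood. For $x,y\in\mathbb{F}^t$, $\langle x,y\rangle=\sum_{i=1}^t x_iy_i$ (over $\mathbb{C}$ one may use $\sum_i x_i\overline{y_i}$). An orthogonal representation of $G=(V,E)$ over $\mathbb{F}$ is an assignment of a vector $u_v\in\mathbb{F}^t$ (for some $t$) to every $v\in V$ such that $\langle u_v,u_v\rangle\neq 0$ for every $v$ and $\langle u_v,u_{v'}\rangle=0$ whenever $v,v'$ are adjacent. Its locality is $\max_{v\in V}\dim\big(\mathrm{span}\{u_{v'} : v'\in\{v\}\cup N(v)\}\big)$. The local orthogonality dimension $\overline{\xi}_l(G,\mathbb{F})$ is the minimum locality of an orthogonal representation of $G$ over $\mathbb{F}$. A graph $G$ is called topologically $t$-chromatic if $t\le \mathrm{Xind}(\mathrm{Hom}(K_2,G))+2$, where $\mathrm{Hom}(K_2,G)$ is the homomorphism complex of $K_2$ in $G$ (a free $\mathbb{Z}_2$-complex) and $\mathrm{Xind}$ denotes its cross-index (as in Simonyi–Tardif–Zsbán). *)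

(* Defs.v *)
From HB Require Import structures.
From mathcomp Require Import all_boot all_order all_algebra.
Set Implicit Arguments. Unset Strict Implicit. Unset Printing Implicit Defensive.
Import Order.TTheory GRing.Theory Num.Theory.
Local Open Scope ring_scope.

(* A simple graph: T a finType of vertices, e : rel T symmetric and irreflexive. *)

Section HomComplex.
Variables (T : finType) (e : rel T).

(* Cells of Hom(K_2, G): pairs (A,B) of nonempty vertex sets, complete to each other. *)
Definition hom_cell (p : {set T} * {set T}) : bool :=
  [&& p.1 != set0, p.2 != set0 & [forall a in p.1, forall b in p.2, e a b]].

Definition cell_le (p q : {set T} * {set T}) : bool :=
  (p.1 \subset q.1) && (p.2 \subset q.2).

(* The Z2-poset Q_d: elements +-1, ..., +-(d+1) (as nonzero integers),
   x <= y iff x = y or |x| < |y|; the involution is x |-> -x. *)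
Definition Q_elt (d : nat) (x : int) : bool := (x != 0) && (`|x| <= (d.+1)%:Z).
Definition Q_le (x y : int) : bool := (x == y) || (`|x| < `|y|).

Definition Z2map_to_Q (d : nat) (f : {set T} * {set T} -> int) : Prop :=
  [/\ forall p, hom_cell p -> Q_elt d (f p),
      forall p, hom_cell p -> f (p.2, p.1) = - f p &
      forall p q, hom_cell p -> hom_cell q -> cell_le p q -> Q_le (f p) (f q)].

(* Xind(Hom(K_2,G)) = min { d | there is a Z2-map to Q_d };
   G topologically t-chromatic  iff  t <= Xind(Hom(K_2,G)) + 2,
   i.e. t <= d + 2 for every d admitting such a Z2-map. *)
Definition topologically_chromatic (t : int) : Prop :=
  forall d : nat, (exists f, Z2map_to_Q d f) -> t <= d%:Z + 2.

End HomComplex.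

Section OrthRep.
Variables (T : finType) (e : rel T) (F : fieldType).

Definition dotr (k : nat) (x y : 'rV[F]_k) : F := \sum_(i < k) x 0 i * y 0 i.

Definition orth_rep (k : nat) (u : T -> 'rV[F]_k) : Prop :=
  (forall v, dotr (u v) (u v) != 0) /\
  (forall v w, e v w -> dotr (u v) (u w) = 0).

(* Matrix whose rows are u_w for w in the closed neighbourhood of v (other rows 0);
   its rank is dim span {u_w : w in {v} \cup N(v)}. *)
Definition nbhd_mx (k : nat) (u : T -> 'rV[F]_k) (v : T) : 'M[F]_(#|T|, k) :=
  \matrix_(i < #|T|)
     (if (enum_val i == v) || e v (enum_val i) then u (enum_val i) else 0).

Definition locality (k : nat) (u : T -> 'rV[F]_k) : nat :=
  (\max_(v : T) \rank (nbhd_mx u v))%N.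

End OrthRep.

(* Main.v *)
Require Import Defs.
From HB Require Import structures.
From mathcomp Require Import all_boot all_order all_algebra.
From mathcomp Require Import zify.
Import Order.TTheory GRing.Theory Num.Theory.
Local Open Scope ring_scope.

Set Implicit Arguments. Unset Strict Implicit.
Section Aux.
Variables (T : finType) (e : rel T) (F : fieldType) (k : nat) (u : T -> 'rV[F]_k).

Definition setmx (A : {set T}) : 'M[F]_(#|T|, k) :=
  \matrix_(i < #|T|) (if enum_val i \in A then u (enum_val i) else 0).

Definition rr (A : {set T}) : nat :=
  find (fun S => (setmx S == setmx A)%MS) (enum {set T}).

Lemma u_sub_setmx (A : {set T}) a : a \in A -> (u a <= setmx A)%MS.
Proof.
move=> aA; have := row_sub (enum_rank a) (setmx A).
by rewrite rowK enum_rankK aA.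
Qed.

Lemma setmx_subP (A : {set T}) (M : 'M[F]_(#|T|, k)) :
  (forall a, a \in A -> (u a <= M)%MS) -> (setmx A <= M)%MS.
Proof.
move=> H; apply/row_subP => i; rewrite rowK.
by case: ifP => [/H //|_]; rewrite sub0mx.
Qed.

Lemma u_sub_nbhd v w : (w == v) || e v w -> (u w <= nbhd_mx e u v)%MS.
Proof.
move=> H; have := row_sub (enum_rank w) (nbhd_mx e u v).
by rewrite /nbhd_mx rowK enum_rankK H.
Qed.

Lemma dotrC (x y : 'rV[F]_k) : dotr x y = dotr y x.
Proof. by rewrite /dotr; apply: eq_bigr => i _; rewrite mulrC. Qed.

Lemma orth_notin a (B : {set T}) : dotr (u a) (u a) != 0 ->
  (forall b, b \in B -> dotr (u a) (u b) = 0) -> ~~ (u a <= setmx B)%MS.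
Proof.
move=> Hn Ho; apply/negP => /submxP [D HD].
have H0 : setmx B *m (u a)^T = 0.
  apply/matrixP => i j; rewrite !mxE.
  rewrite ?(ord1 j).
  case iB: (enum_val i \in B).
    rewrite -[RHS](Ho _ iB) dotrC /dotr.
    by apply: eq_bigr => l _; rewrite !mxE iB.
  by apply: big1 => l _; rewrite !mxE iB ?mxE ?mul0r.
have : (u a *m (u a)^T) 0 0 = 0 by rewrite {1}HD -mulmxA H0 mulmx0 mxE.
move=> H1; have E : dotr (u a) (u a) = (u a *m (u a)^T) 0 0.
  by rewrite mxE; apply: eq_bigr => l _; rewrite !mxE.
by rewrite E H1 eqxx in Hn.

Qed.

Lemma rr_eq (A B : {set T}) : (setmx A == setmx B)%MS -> rr A = rr B.
Proof.
move=> /andP [h1 h2]; rewrite /rr; apply: eq_find => S /=.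
apply/andP/andP => -[x y]; split.
- exact: submx_trans x h1.
- exact: submx_trans h2 y.
- exact: submx_trans x h2.
- exact: submx_trans h1 y.
Qed.

Lemma rr_eqP (A B : {set T}) : rr A = rr B -> (setmx A == setmx B)%MS.
Proof.
move=> HAB.
have hA : has (fun S => (setmx S == setmx A)%MS) (enum {set T}).
  by apply/hasP; exists A; rewrite ?mem_enum ?submx_refl.
have hB : has (fun S => (setmx S == setmx B)%MS) (enum {set T}).
  by apply/hasP; exists B; rewrite ?mem_enum ?submx_refl.
have := nth_find set0 hA; have := nth_find set0 hB.
rewrite -/(rr A) -/(rr B) HAB.
move=> /andP [x1 y1] /andP [x2 y2]; apply/andP; split.
- exact: submx_trans y2 x1.
- exact: submx_trans y1 x2.
Qed.

End Aux.

Theorem mainTheorem1 (T : finType) (e : rel T)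
  (e_sym : symmetric e) (e_irr : irreflexive e)
  (has_edge : exists x y, e x y)
  (t : int) (Htop : topologically_chromatic e t) :
  forall (F : fieldType) (k : nat) (u : T -> 'rV[F]_k),
    orth_rep e u -> ((t + 1) %/ 2)%Z + 1 <= (locality e u)%:Z.
Proof.
move=> F k u [Hn Ho].
set loc := locality e u.
have key : forall (A B : {set T}) a, a \in A -> (forall a b, a \in A -> b \in B -> e a b) ->
    (\rank (setmx u B) < loc)%N.
  move=> A B a aA HAB.
  have Hnot : ~~ (u a <= setmx u B)%MS.
    by apply: orth_notin => // b bB; apply: Ho; apply: HAB.
  have lt1 : (setmx u B < setmx u B + u a)%MS.
    rewrite ltmxE addsmxSl /=; apply/negP => H; move/negP: Hnot; apply.
    exact: submx_trans (addsmxSr _ _) H.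
  apply: (leq_trans (rank_ltmx lt1)).
  apply: (@leq_trans (\rank (nbhd_mx e u a))); last exact: leq_bigmax.
  apply: mxrankS; rewrite addsmx_sub u_sub_nbhd ?eqxx // andbT.
  by apply: setmx_subP => b bB; apply: u_sub_nbhd; rewrite HAB ?orbT.
have pos : forall (A : {set T}) a, a \in A -> (0 < \rank (setmx u A))%N.
  move=> A a aA; rewrite lt0n mxrank_eq0; apply/negP => /eqP H0.
  have := u_sub_setmx u aA; rewrite H0 => /submx0null ua0.
  by move: (Hn a); rewrite ua0 /dotr big1 ?eqxx // => i _; rewrite mxE mul0r.
have cellP : forall p, hom_cell e p ->
   [/\ (0 < \rank (setmx u p.1))%N, (0 < \rank (setmx u p.2))%N,
       (\rank (setmx u p.1) < loc)%N, (\rank (setmx u p.2) < loc)%N &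
       rr u p.1 != rr u p.2].
  move=> [A B] /and3P [/set0Pn [a aA] /set0Pn [b bB] /forallP Hall] /=.
  have HAB : forall a b, a \in A -> b \in B -> e a b.
    by move=> x y xA yB; move: (Hall x); rewrite xA /= => /forallP /(_ y); rewrite yB.
  split; first exact: pos aA; first exact: pos bB.
  - apply: (key B A b bB) => x y xB yA; rewrite e_sym; exact: HAB.
  - exact: (key A B a aA).
  apply/negP => /eqP /rr_eqP /eqmxP HE.
  have := u_sub_setmx u aA; rewrite HE; apply/negP.
  by apply: orth_notin => // y yB; apply: Ho; apply: HAB.
have loc2 : (2 <= loc)%N.
  case: has_edge => x [y exy].
  have c : hom_cell e ([set x], [set y]).
    rewrite /hom_cell /=; apply/and3P; split; try (apply/set0Pn; eexists; exact: set11).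
    apply/forallP => a; apply/implyP; rewrite in_set1 => /eqP ->.
    by apply/forallP => b; apply/implyP; rewrite in_set1 => /eqP ->.
  by case: (cellP _ c) => /= ? ? ? ?; lia.
pose n (p : {set T} * {set T}) : nat := (\rank (setmx u p.1) + \rank (setmx u p.2)).-1.
pose f (p : {set T} * {set T}) : int :=
  if (rr u p.1 < rr u p.2)%N then (n p)%:Z else - (n p)%:Z.
have normf : forall p, `|f p| = (n p)%:Z.
  by move=> p; rewrite /f; case: ifP; rewrite ?normrN.
have Z2 : Z2map_to_Q e (2 * loc - 4)%N f.
  split.
  - move=> p /cellP [h1 h2 h3 h4 _]; rewrite /Q_elt normf.
    apply/andP; split.
      by rewrite /f; case: ifP => _; rewrite ?oppr_eq0 /n; apply/eqP; lia.
    by rewrite lez_nat /n; lia.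
  - move=> p /cellP [_ _ _ _ hne]; rewrite /f /= /n /= addnC.
    case: ltnP => h1; case: ltnP => h2 //; try lia.
  - move=> p q /cellP [hp1 hp2 _ _ _] /cellP [hq1 hq2 _ _ _] /andP [s1 s2].
    have l1 := mxrank_leqif_eq (setmx_subP (fun a aA => u_sub_setmx u (subsetP s1 a aA))).
    have l2 := mxrank_leqif_eq (setmx_subP (fun a aA => u_sub_setmx u (subsetP s2 a aA))).
    rewrite /Q_le !normf.
    have [le1 eq1] := l1; have [le2 eq2] := l2.
    case E1 : (setmx u p.1 == setmx u q.1)%MS; case E2 : (setmx u p.2 == setmx u q.2)%MS.
    + apply/orP; left; rewrite /f /n (rr_eq E1) (rr_eq E2).
      by move: eq1 eq2; rewrite E1 E2 => /eqP -> /eqP ->.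
    1-3: rewrite ?E1 ?E2 in eq1 eq2.
    1-3: apply/orP; right; rewrite ltz_nat /n; lia.
have Ht := Htop _ (ex_intro _ f Z2).
have Hf := @lez_floor (t + 1) 2 isT.
move: Ht Hf; rewrite -(subnK loc2).
set l := (loc - 2)%N; rewrite -/loc.
move=> Ht Hf.
have : (2 * (l + 2) - 4)%N = (2 * l)%N by lia.
move=> E; rewrite E in Ht.
rewrite -[((l + 2)%N)%:Z]/((l%:Z) + 2).
move: Ht; rewrite -[((2 * l)%N)%:Z]/((2 * l%:Z)).
set q := ((t + 1) %/ 2)%Z.
lia.
Qed.
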